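(* Let $a_n$, $s$ and $c$ be any integers and let $n$ be a positive integer. Then \[ \sum_{a_{n-1}=c}^{a_n}\sum_{a_{n-2}=c}^{a_{n-1}}\cdots\sum_{a_0=c}^{a_1}(-1)^{a_0}F_{3a_0+s}=(-1)^{a_n}\frac{F_{n+3a_n+s}}{2^n}+(-1)^c\sum_{j=0}^{n-1}\frac{F_{n-j+3(c-1)+s}}{2^{n-j}}\binom{a_n+j-c}{j}, \] and \[ \sum_{a_{n-1}=c}^{a_n}\sum_{a_{n-2}=c}^{a_{n-1}}\cdots\sum_{a_0=c}^{a_1}(-1)^{a_0}L_{3a_0+s}=(-1)^{a_n}\frac{L_{n+3a_n+s}}{2^n}+(-1)^c\sum_{j=0}^{n-1}\frac{L_{n-j+3(c-1)+s}}{2^{n-j}}\binom{a_n+j-c}{j}. \]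
   Context: $F_j$ and $L_j$ are the Fibonacci and Lucas numbers: $F_0=0,F_1=1$, $L_0=2,L_1=1$, both satisfying $X_j=X_{j-1}+X_{j-2}$, extended to all integer indices via the recurrence. For integers $c,m$ and a function $f$ on the integers, $\sum_{k=c}^m f(k)$ denotes the usual sum if $m\ge c$, equals $0$ if $m=c-1$, and equals $-\sum_{k=m+1}^{c-1}f(k)$ if $m\le c-2$. The nested sum $\sum_{a_{n-1}=c}^{a_n}\cdots\sum_{a_0=c}^{a_1}g(a_0)$ is the iterated sum with $n$ summation signs: innermost over $a_0$ from $c$ to $a_1$, then $a_1$ from $c$ to $a_2$, ..., outermost $a_{n-1}$ from $c$ to $a_n$. For an integer $j\ge0$ and any number $y$, $\binom{y}{j}=y(y-1)\cdots(y-j+1)/j!$. *)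

(* Defs.v *)
From mathcomp Require Import all_boot all_order all_algebra.
Set Implicit Arguments. Unset Strict Implicit. Unset Printing Implicit Defensive.
Import Order.TTheory GRing.Theory Num.Theory.
Local Open Scope ring_scope.

(* Forward iteration of X_j = X_{j-1} + X_{j-2}: fwd n = (X_n, X_{n+1}). *)
Fixpoint rec_fwd (x0 x1 : int) (n : nat) : int * int :=
  match n with
  | O => (x0, x1)
  | S k => let p := rec_fwd x0 x1 k in (p.2, p.1 + p.2)
  end.

(* Backward iteration X_{j-2} = X_j - X_{j-1}: bwd n = (X_{-n}, X_{-n+1}). *)
Fixpoint rec_bwd (x0 x1 : int) (n : nat) : int * int :=
  match n with
  | O => (x0, x1)
  | S k => let p := rec_bwd x0 x1 k in (p.2 - p.1, p.1)
  end.

Definition recZ (x0 x1 : int) (z : int) : int :=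
  match z with
  | Posz n => (rec_fwd x0 x1 n).1
  | Negz n => (rec_bwd x0 x1 n.+1).1   (* Negz n = -(n+1) *)
  end.

Definition Fib (z : int) : int := recZ 0 1 z.
Definition Luc (z : int) : int := recZ 2 1 z.

Definition gsum (c m : int) (f : int -> rat) : rat :=
  if c <= m + 1 then \sum_(0 <= i < absz (m - c + 1)%R) f (c + i%:Z)
  else - \sum_(0 <= i < absz (c - 1 - m)%R) f (m + 1 + i%:Z).

(* nested n c g x = sum_{a_{n-1}=c}^{x} ... sum_{a_0=c}^{a_1} g(a_0), n signs. *)
Fixpoint nested (n : nat) (c : int) (g : int -> rat) : int -> rat :=
  match n with
  | O => g
  | S k => fun x => gsum c x (nested k c g)
  end.

Definition gbinom (y : rat) (j : nat) : rat :=
  (\prod_(i < j) (y - i%:R)) / (j`!)%:R.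

(* Main.v *)
Require Import Defs.
From mathcomp Require Import all_boot all_order all_algebra.
From mathcomp Require Import zify ring lra.
Import Order.TTheory GRing.Theory Num.Theory.
Local Open Scope ring_scope.

Lemma recZ_neg x0 x1 (n : nat) : recZ x0 x1 (- (n.+1)%:Z) = (rec_bwd x0 x1 n.+1).1.
Proof. by rewrite -NegzE. Qed.

Lemma recZ_rec x0 x1 (z : int) :
  recZ x0 x1 (z + 2) = recZ x0 x1 (z + 1) + recZ x0 x1 z.
Proof.
case: z => n.
  have -> : Posz n + 2 = Posz n.+2 by lia.
  have -> : Posz n + 1 = Posz n.+1 by lia.
  by rewrite /= addrC.
rewrite NegzE.
case: n => [|[|m]].
- have -> : - (0.+1)%:Z + 2 = Posz 1 by lia.
  have -> : - (0.+1)%:Z + 1 = Posz 0 by lia.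
  rewrite recZ_neg /=. ring.
- have -> : - (1.+1)%:Z + 2 = Posz 0 by lia.
  have -> : - (1.+1)%:Z + 1 = - (0.+1)%:Z by lia.
  rewrite !recZ_neg /=. ring.
- have -> : - (m.+2.+1)%:Z + 2 = - (m.+1)%:Z by lia.
  have -> : - (m.+2.+1)%:Z + 1 = - (m.+1.+1)%:Z by lia.
  rewrite !recZ_neg /=. ring.
Qed.

Lemma gsum_tele (c x : int) (f D : int -> rat) :
  (forall a, f a = D a - D (a - 1)) -> gsum c x f = D x - D (c - 1).
Proof.
move=> hf; rewrite /gsum; case: ifP => h.
  rewrite (telescope_sumr_eq (fun k : nat => D (c + k%:Z - 1))) //.
    have -> : c + (absz (x - c + 1)%R)%:Z - 1 = x by lia.
    by rewrite addr0.
  move=> k _; rewrite hf; congr (D _ - D _); lia.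
rewrite (telescope_sumr_eq (fun k : nat => D (x + k%:Z))) //.
  have -> : x + (absz (c - 1 - x)%R)%:Z = c - 1 by lia.
  by rewrite addr0 opprB.
move=> k _; rewrite hf; congr (D _ - D _); lia.
Qed.

Lemma gbinom0 y : gbinom y 0 = 1.
Proof. by rewrite /gbinom big_ord0 divr1. Qed.

Lemma gbinomS y j : gbinom (y + 1) j.+1 = gbinom y j.+1 + gbinom y j.
Proof.
rewrite /gbinom big_ord_recl big_ord_recr /=.
rewrite (eq_bigr (fun i : 'I_j => y - i%:R)); last first.
  by move=> i _; rewrite /bump /= add1n -addn1 natrD; ring.
rewrite factS natrM.
have h1 : (j`!)%:R != 0 :> rat by rewrite pnatr_eq0 -lt0n fact_gt0.
have e : (j.+1)%:R = j%:R + 1 :> rat by rewrite -addn1 natrD.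
have h2 : j%:R + 1 != 0 :> rat by rewrite -e pnatr_eq0.
rewrite e.
set P := \prod_(i < j) _.
field. by rewrite h1 h2.
Qed.

Lemma gbinom_self (k : nat) : gbinom k%:R k.+1 = 0.
Proof. by rewrite /gbinom big_ord_recr /= subrr mulr0 mul0r. Qed.

Lemma signm1 (x : int) : (-1 : rat) ^ (x - 1) = - (-1) ^ x.
Proof.
rewrite expfzDr ?oppr_eq0 ?oner_eq0 //.
have -> : (-1 : rat) ^ (-1 : int) = -1 by rewrite /exprz /= expr1 invrN1.
by rewrite mulrN1.
Qed.

Section Gen.
Variable X : int -> int.
Hypothesis HX : forall z, X (z + 2) = X (z + 1) + X z.
Variables s c : int.

Definition T1 (n : nat) (x : int) : rat := (-1) ^ x * (X (n%:Z + 3 * x + s))%:~R / 2 ^+ n.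
Definition Tj (n : nat) (x : int) (j : nat) : rat :=
  (X ((n - j)%:Z + 3 * (c - 1) + s))%:~R / 2 ^+ (n - j) * gbinom (x + j%:Z - c)%:~R j.
Definition R (n : nat) (x : int) : rat := T1 n x + (-1) ^ c * \sum_(j < n) Tj n x j.

Lemma T1_diff n x : T1 n.+1 x - T1 n.+1 (x - 1) = T1 n x.
Proof.
rewrite /T1 signm1.
set k := n%:Z + 3 * x + s.
have -> : n.+1%:Z + 3 * x + s = (k - 1) + 2 by rewrite /k; lia.
have -> : n.+1%:Z + 3 * (x - 1) + s = (k - 2) by rewrite /k; lia.
have H1 := HX (k - 1). have H2 := HX (k - 2).
have e1 : k - 1 + 1 = k by lia.
have e2 : k - 2 + 2 = k by lia.
have e3 : k - 2 + 1 = k - 1 by lia.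
rewrite e1 in H1; rewrite e2 e3 in H2.
have H : X (k - 1 + 2) + X (k - 2) = X k + X k by rewrite H1 -addrA -H2.
have Hr : (X (k - 1 + 2))%:~R + (X (k - 2))%:~R = (X k)%:~R + (X k)%:~R :> rat.
  by rewrite -!intrD H.
rewrite exprS.
have h2 : (2 : rat) != 0 by [].
have h2n : (2 : rat) ^+ n != 0 by rewrite expf_neq0.
move: Hr; set A := (X (k - 1 + 2))%:~R; set B := (X (k - 2))%:~R; set C := (X k)%:~R => Hr.
have -> : A = C + C - B by rewrite -Hr; ring.
field. by rewrite h2n.
Qed.

Lemma Tj_diff n x j : Tj n.+1 x j.+1 - Tj n.+1 (x - 1) j.+1 = Tj n x j.
Proof.
rewrite /Tj subSS.
have -> : (x + j.+1%:Z - c)%:~R = (x - 1 + j.+1%:Z - c)%:~R + 1 :> rat.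
  by rewrite -[1 : rat]/((1 : int)%:~R) -intrD; congr (_%:~R); lia.
rewrite gbinomS.
have -> : (x - 1 + j.+1%:Z - c) = x + j%:Z - c by lia.
ring.
Qed.

Lemma Tj0 n x y : Tj n x 0 = Tj n y 0.
Proof. by rewrite /Tj !gbinom0. Qed.

Lemma R_diff n x : R n.+1 x - R n.+1 (x - 1) = R n x.
Proof.
rewrite /R !big_ord_recl (Tj0 _ (x - 1) x) -(T1_diff n x).
have -> : \sum_(i < n) Tj n x i =
   \sum_(i < n) Tj n.+1 x (lift ord0 i) - \sum_(i < n) Tj n.+1 (x - 1) (lift ord0 i).
  rewrite -sumrB; apply: eq_bigr => i _.
  by rewrite /= /bump leq0n add1n Tj_diff.
change (Tj n.+1 x ord0) with (Tj n.+1 x 0).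
ring.
Qed.

Lemma R_cm1 n : R n.+1 (c - 1) = 0.
Proof.
rewrite /R big_ord_recl big1; last first.
  move=> i _; rewrite /Tj /= /bump leq0n add1n.
  have -> : c - 1 + i.+1%:Z - c = i%:Z by lia.
  by rewrite pmulrn gbinom_self mulr0.
rewrite /T1 /Tj subn0 gbinom0 signm1.
ring.
Qed.

Lemma R0 x : R 0 x = (-1) ^ x * (X (3 * x + s))%:~R.
Proof. by rewrite /R /T1 big_ord0 add0r expr0 divr1 mulr0 addr0. Qed.

Lemma nested_R n x : nested n c (fun a => (-1 : rat) ^ a * (X (3 * a + s))%:~R) x = R n x.
Proof.
elim: n x => [|n IH] x /=; first by rewrite R0.
rewrite (@gsum_tele c x _ (R n.+1)); first by rewrite R_cm1 subr0.
by move=> a; rewrite IH R_diff.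
Qed.
End Gen.

Theorem theorem2 (an s c : int) (n : nat) (hn : (0 < n)%N) :
  nested n c (fun a => (-1 : rat) ^ a * (Fib (3 * a + s))%:~R) an =
    (-1 : rat) ^ an * (Fib (n%:Z + 3 * an + s))%:~R / 2 ^+ n
    + (-1 : rat) ^ c * \sum_(j < n)
        (Fib ((n - j)%:Z + 3 * (c - 1) + s))%:~R / 2 ^+ (n - j)
        * gbinom (an + j%:Z - c)%:~R j
  /\
  nested n c (fun a => (-1 : rat) ^ a * (Luc (3 * a + s))%:~R) an =
    (-1 : rat) ^ an * (Luc (n%:Z + 3 * an + s))%:~R / 2 ^+ n
    + (-1 : rat) ^ c * \sum_(j < n)
        (Luc ((n - j)%:Z + 3 * (c - 1) + s))%:~R / 2 ^+ (n - j)
        * gbinom (an + j%:Z - c)%:~R j.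
Proof.
split.
- exact: (nested_R _ (@recZ_rec 0 1) s c n an).
- exact: (nested_R _ (@recZ_rec 2 1) s c n an).
Qed.
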